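(* Let $p$ be an odd prime. If $G$ is a quasi-powerful $p$-group then $G^{p}$ is powerful.
   Context: For an odd prime $p$, a finite $p$-group $G$ is powerful if $[G,G]\le G^{p}$, where $G^{p}=\langle g^{p}\mid g\in G\rangle$, and $G$ is quasi-powerful if $G/Z(G)$ is powerful. *)

(* Defs.v *)
From mathcomp Require Import all_boot all_fingroup all_solvable.
Set Implicit Arguments. Unset Strict Implicit. Unset Printing Implicit Defensive.
Local Open Scope group_scope.

Definition pow_subgroup (gT : finGroupType) (p : nat) (G : {set gT}) : {set gT} :=
  <<[set x ^+ p | x in G]>>.

(* G is powerful (p odd): [G,G] <= G^p *)
Definition powerful (gT : finGroupType) (p : nat) (G : {set gT}) : bool :=
  [~: G, G] \subset pow_subgroup p G.

Definition quasi_powerful (gT : finGroupType) (p : nat) (G : {group gT}) : bool :=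
  powerful p (G / 'Z(G)).

(* Main.v *)
Require Import Defs.
From mathcomp Require Import all_boot all_fingroup all_solvable.
Set Implicit Arguments. Unset Strict Implicit. Unset Printing Implicit Defensive.
Local Open Scope group_scope.

Section Aux.
Variable p : nat.

Lemma pow_sub (gT : finGroupType) (G : {group gT}) : pow_subgroup p G \subset G.
Proof.
rewrite /pow_subgroup gen_subG; apply/subsetP=> _ /imsetP[x Gx ->].
exact: groupX.
Qed.

Lemma pow_norm (gT : finGroupType) (A : {set gT}) (B : {group gT}) :
  B \subset 'N(A) -> B \subset 'N(pow_subgroup p A).
Proof.
move=> nAB; apply: subset_trans (norm_gen _).
apply/subsetP=> g Bg; rewrite inE; apply/subsetP=> _ /imsetP[_ /imsetP[x Ax ->] ->].
rewrite conjXg; apply: imset_f; rewrite memJ_norm //.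
exact: (subsetP nAB).
Qed.

Lemma pow_quo (gT : finGroupType) (H : {group gT}) (A : {set gT}) :
  A \subset 'N(H) -> pow_subgroup p (A / H) = pow_subgroup p A / H.
Proof.
move=> nHA; rewrite /pow_subgroup quotient_gen; last first.
  apply/subsetP=> _ /imsetP[x Ax ->]; apply: groupX; exact: (subsetP nHA).
congr <<_>>; rewrite /quotient !morphimEsub //; last first.
  apply/subsetP=> _ /imsetP[x Ax ->]; apply: groupX; exact: (subsetP nHA).
rewrite -!imset_comp; apply: eq_in_imset => x Ax /=.
by rewrite morphX // (subsetP nHA).
Qed.

End Aux.

Lemma rearr (gT : finGroupType) (a b : gT) m n t :
  commute a b -> a ^+ m * b ^+ n * b ^+ t * a = a ^+ m * a * (b ^+ t * b ^+ n).
Proof.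
move=> cab; rewrite -!mulgA; congr (_ * _); rewrite mulgA -expgD addnC expgD.
apply: commute_sym; apply: commuteM; exact: commuteX.
Qed.

Lemma core0 (p : nat) (rT : finGroupType) (Q : {group rT}) :
  prime p -> odd p ->
  [~: Q, Q] \subset pow_subgroup p Q ->
  {in pow_subgroup p Q, forall m, m ^+ p = 1} ->
  [~: [~: pow_subgroup p Q, Q], Q] = 1 ->
  [~: pow_subgroup p Q, Q] = 1.
Proof.
move=> pr_p odd_p sQ'M expM /commG1P cKQ.
set M := pow_subgroup p Q in sQ'M expM cKQ *.
apply/commG1P; rewrite /M /pow_subgroup gen_subG.
apply/subsetP=> _ /imsetP[x Qx ->]; apply/centP=> y Qy.
apply/commgP/eqP.
set c := [~ x, y]; set d := [~ c, x].
have Mc : c \in M by apply: (subsetP sQ'M); apply: mem_commg.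
have Qc : c \in Q by apply: (subsetP (pow_sub p Q)).
have Kd : d \in [~: M, Q] by apply: mem_commg.
have cdQ : forall z, z \in Q -> commute d z.
  by move=> z Qz; apply: (centP (subsetP cKQ _ Kd)).
have Md : d \in M.
  apply: (subsetP sQ'M); apply: subsetP Kd; apply: commgSS => //; exact: pow_sub.
have key : forall k, [~ x ^+ k, y] = c ^+ k * d ^+ 'C(k, 2).
  elim=> [|k IH]; first by rewrite !expg0 comm1g mulg1.
  rewrite expgSr commMgJ IH conjMg !conjXg conjg_mulR -/d.
  have -> : d ^ x = d by apply/conjg_fixP; apply/commgP; apply: cdQ.
  rewrite expgMn; last by apply: commute_sym; apply: cdQ.
  rewrite binS bin1 expgD expgSr.
  by rewrite -/c rearr //; exact: commute_sym (cdQ c Qc).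
rewrite key expM //.
have /dvdnP[q ->] : p %| 'C(p, 2).
  by apply: prime_dvd_bin => //; rewrite odd_prime_gt2.
by rewrite mulnC expgM expM // expg1n mulg1.
Qed.

Lemma core (p : nat) (rT : finGroupType) (Q : {group rT}) :
  prime p -> odd p -> nilpotent Q ->
  [~: Q, Q] \subset pow_subgroup p Q ->
  {in pow_subgroup p Q, forall m, m ^+ p = 1} ->
  [~: pow_subgroup p Q, Q] = 1.
Proof.
move=> pr_p odd_p nilQ sQ'M expM.
set M := pow_subgroup p Q in sQ'M expM *.
have sMQ : M \subset Q by exact: pow_sub.
have nMQ : Q \subset 'N(M) by apply: pow_norm; exact: normG.
have sKQ : [~: M, Q] \subset Q by rewrite commg_subr (subset_trans sMQ (normG Q)).
have nKQ : Q \subset 'N([~: M, Q]) by apply: normsR => //; exact: normG.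
apply/eqP; apply/negPn/negP => ntK.
have prK := nil_comm_properl nilQ sKQ ntK (A := Q).
have /prK : Q \subset 'N_Q([~: M, Q]) by rewrite subsetI subxx nKQ.
set K2 := [~: [~: M, Q], Q] => prK2.
have nK2Q : Q \subset 'N(K2) by apply: normsR => //; exact: normG.
have nK2M : M \subset 'N(K2) := subset_trans sMQ nK2Q.
have expQ : {in M / K2, forall m, m ^+ p = 1}.
  move=> _ /morphimP[x Nx Mx ->].
  by rewrite -morphX // expM // morph1.
have := @core0 p _ (Q / K2)%G pr_p odd_p.
rewrite /= pow_quo // -!quotientR //; last exact: subset_trans sKQ nK2Q.
rewrite quotientS // trivg_quotient => /(_ isT expQ erefl)/eqP. rewrite -subG1 quotient_sub1; last exact: subset_trans sKQ nK2Q.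
by move=> sKK2; move: prK2; rewrite properE sKK2 andbF.
Qed.

Theorem theorem4p9 (gT : finGroupType) (p : nat) (G : {group gT}) :
  prime p -> odd p -> p.-group G -> quasi_powerful p G ->
  powerful p (pow_subgroup p G).
Proof.
move=> pr_p odd_p pG; rewrite /quasi_powerful /powerful.
set Z := 'Z(G).
have nZG : G \subset 'N(Z) := normal_norm (center_normal G).
have sZG : Z \subset G := center_sub G.
rewrite pow_quo // -quotientR // sub_quotient_pre; last first.
  by apply: subset_trans nZG; rewrite commg_subr normG.
rewrite quotientK; last exact: subset_trans (pow_sub p G) nZG.
set H := pow_subgroup p G => sG'ZH.
set N := pow_subgroup p H.
have sHG : H \subset G by exact: pow_sub.
have nHG : G \subset 'N(H) by apply: pow_norm; exact: normG.
have nNG : G \subset 'N(N) by exact: pow_norm.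
have sNH : N \subset H by exact: pow_sub.
set L := (N <*> Z)%G.
have nLG : G \subset 'N(L) by exact: normsY.
have sZL : Z \subset L by exact: joing_subr.
have sNL : N \subset L by exact: joing_subl.
have nLH : H \subset 'N(L) := subset_trans sHG nLG.
have := @core p _ (G / L)%G pr_p odd_p (quotient_nil _ (pgroup_nil pG)).
rewrite /= pow_quo // -!quotientR //.
have -> : [~: G, G] / L \subset H / L.
  rewrite sub_quotient_pre ?quotientK //; last first.
    by apply: subset_trans nLG; rewrite commg_subr normG.
  by apply: subset_trans sG'ZH _; apply: mulSg.
move=> /(_ isT).
have expQ : {in H / L, forall m, m ^+ p = 1}.
  move=> _ /morphimP[x Nx Hx ->].
  rewrite -morphX // /= coset_id //; apply: (subsetP sNL).
  by rewrite mem_gen //; apply/imsetP; exists x.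
move=> /(_ expQ)/eqP; rewrite -subG1 quotient_sub1; last first.
  by apply: subset_trans nLG; rewrite commg_subr (subset_trans sHG (normG G)).
rewrite /= norm_joinEr; last exact: subset_trans sZG nNG.
move=> sHGNZ.
have key : forall h y, h \in H -> y \in G -> [~ h, y ^+ p] \in N.
  move=> h y Hh Gy.
  have Gh : h \in G := subsetP sHG h Hh.
  have /mulsgP[n z Nn Zz def_c] : [~ h, y] \in N * Z.
    by apply: (subsetP sHGNZ); apply: mem_commg.
  have Gn : n \in G by apply: (subsetP sHG); apply: (subsetP sNH).
  have cz : forall g, g \in G -> commute z g.
    by move=> g Gg; move: Zz => /centerP[_ /(_ g Gg)] /commute_sym.
  have Hz : z \in H.
    have -> : z = n^-1 * [~ h, y] by rewrite def_c mulKg.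
    rewrite groupM ?groupV //; first exact: (subsetP sNH).
    by rewrite /commg groupM ?groupV // memJ_norm // (subsetP nHG).
  have ind : forall k, exists2 m, m \in N & [~ h, y ^+ k] = z ^+ k * m.
    elim=> [|k [m Nm IH]]; first by exists 1; rewrite ?group1 // !expg0 commg1 mulg1.
    exists (m * n ^ (y ^+ k)).
      by rewrite groupM // memJ_norm // (subsetP nNG) // groupX.
    rewrite expgS commgMJ IH def_c conjMg.
    have -> : z ^ (y ^+ k) = z.
      by apply/conjg_fixP/commgP; apply: cz; rewrite groupX.
    have Gw : n ^ (y ^+ k) \in G by rewrite groupJ // groupX.
    have Gm : m \in G by apply: (subsetP sHG); apply: (subsetP sNH).
    move: (n ^ (y ^+ k)) Gw => w Gw.
    rewrite expgSr -!mulgA; congr (_ * _); rewrite !mulgA -(mulgA z).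
    exact: commute_sym (cz _ (groupM Gm Gw)).
  have [m Nm ->] := ind p.
  by rewrite groupM // mem_gen //; apply/imsetP; exists z.
have nNH : H \subset 'N(N) := subset_trans sHG nNG.
have nNS : [set x ^+ p | x in G] \subset 'N(N).
  by apply: subset_trans nNG; apply/subsetP=> _ /imsetP[x Gx ->]; rewrite groupX.
rewrite -quotient_cents2 // {1}/H /pow_subgroup quotient_gen // gen_subG.
rewrite -quotient_gen // quotient_cents2 // /commutator gen_subG.
apply/subsetP=> _ /imset2P[s h Ss Hh ->]; case/imsetP: Ss => y Gy ->.
by rewrite -invg_comm groupV key.
Qed.
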